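(* Let $\nabla$ be a non-flat, torsion-free, real-analytic, geodesically complete affine connection on $\mathbf{R}^2$ which is invariant under the standard linear action of $\mathrm{SL}(2,\mathbf{R})$. Then, for some $k\in\mathbf{R}^*$, $$\nabla_{\partial_x}\partial_x=ky^2E,\quad \nabla_{\partial_x}\partial_y=-kxyE,\quad \nabla_{\partial_y}\partial_y=kx^2E,\qquad E=x\partial_x+y\partial_y.$$ Its parametrized geodesics are either lines through the origin parametrized at constant speed, or conics centered at the origin of special affine curvature $\sqrt[3]{k}$, parametrized at constant speed with respect to special affine arc length.
   Context: Special affine arc length and special affine curvature refer to the invariants of plane curves under the group of area-preserving affine maps $\mathrm{SL}(2,\mathbf{R})\ltimes\mathbf{R}^2$ (for a curve parametrized so that $\det(c',c'')=1$, the parameter is the special affine arc length and the special affine curvature is $\kappa=\det(c'',c''')$). *)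

(* Defs.v *)
From Stdlib Require Import Reals.
From Coquelicot Require Import Coquelicot.
Open Scope R_scope.

(* Points and tangent vectors of R^2 are pairs (x, y); index 0 = x, 1 = y. *)
Definition vec := (R * R)%type.

Definition cmp (v : vec) (i : nat) : R := if Nat.eqb i 0 then fst v else snd v.

(* An affine connection on R^2 given by its Christoffel symbols:
   G i j k x y = Gamma^k_{ij}(x,y), i.e. nabla_{d_i} d_j = sum_k G i j k d_k
   (only indices 0,1 are meaningful). *)
Definition Chr := nat -> nat -> nat -> R -> R -> R.

Definition sum2 (f : nat -> R) : R := f 0%nat + f 1%nat.

(* Gamma(p)(u,v) = sum_{i,j} u_i v_j Gamma^k_{ij}(p) d_k, i.e. nabla_u V at p
   for the constant field V = v. *)
Definition Gam (G : Chr) (p u v : vec) : vec :=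
  (sum2 (fun i => sum2 (fun j => G i j 0%nat (fst p) (snd p) * cmp u i * cmp v j)),
   sum2 (fun i => sum2 (fun j => G i j 1%nat (fst p) (snd p) * cmp u i * cmp v j))).

Definition torsion_free (G : Chr) : Prop :=
  forall i j k x y, (i < 2)%nat -> (j < 2)%nat -> (k < 2)%nat ->
    G i j k x y = G j i k x y.

Definition real_analytic2 (f : R -> R -> R) : Prop :=
  forall x0 y0, exists r : R, 0 < r /\ exists a : nat -> nat -> R,
    (forall m, ex_series (fun n => Rabs (a m n) * r ^ m * r ^ n)) /\
    ex_series (fun m => Series (fun n => Rabs (a m n) * r ^ m * r ^ n)) /\
    (forall u v, Rabs u < r -> Rabs v < r ->
       f (x0 + u) (y0 + v) = Series (fun m => Series (fun n => a m n * u ^ m * v ^ n))).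

Definition real_analytic_conn (G : Chr) : Prop :=
  forall i j k, (i < 2)%nat -> (j < 2)%nat -> (k < 2)%nat -> real_analytic2 (G i j k).

Definition dpart (i : nat) (f : R -> R -> R) (x y : R) : R :=
  if Nat.eqb i 0 then Derive (fun t => f t y) x else Derive (fun t => f x t) y.

(* Curvature components: R(d_i, d_j) d_k = sum_l curv G l i j k d_l. *)
Definition curv (G : Chr) (l i j k : nat) (x y : R) : R :=
  dpart i (G j k l) x y - dpart j (G i k l) x y
  + sum2 (fun m => G i m l x y * G j k m x y - G j m l x y * G i k m x y).

Definition flat (G : Chr) : Prop :=
  forall l i j k x y, (l < 2)%nat -> (i < 2)%nat -> (j < 2)%nat -> (k < 2)%nat ->
    curv G l i j k x y = 0.

Definition has_deriv (c v : R -> vec) : Prop :=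
  forall t, is_derive (fun s => fst (c s)) t (fst (v t)) /\
            is_derive (fun s => snd (c s)) t (snd (v t)).

Definition geodesic_data (G : Chr) (c v a : R -> vec) : Prop :=
  has_deriv c v /\ has_deriv v a /\
  forall t, fst (a t) + fst (Gam G (c t) (v t) (v t)) = 0 /\
            snd (a t) + snd (Gam G (c t) (v t) (v t)) = 0.

Definition is_geodesic (G : Chr) (c : R -> vec) : Prop :=
  exists v a, geodesic_data G c v a.

Definition geod_complete (G : Chr) : Prop :=
  forall p w : vec, exists c v a, geodesic_data G c v a /\ c 0 = p /\ v 0 = w.

Definition lin (a b c d : R) (p : vec) : vec :=
  (a * fst p + b * snd p, c * fst p + d * snd p).

(* Invariance under the linear map A (A_* nabla = nabla); as A is linear its
   second derivative vanishes, so this is Gamma(Ap)(Au,Av) = A Gamma(p)(u,v). *)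
Definition SL2_invariant (G : Chr) : Prop :=
  forall a b c d, a * d - b * c = 1 ->
    forall p u v, Gam G (lin a b c d p) (lin a b c d u) (lin a b c d v)
                  = lin a b c d (Gam G p u v).

Definition det2 (u v : vec) : R := fst u * snd v - snd u * fst v.

(* Main.v *)
Require Import Defs.
From Stdlib Require Import Reals Lra Lia.
From Coquelicot Require Import Coquelicot.
Open Scope R_scope.

Definition Fm (a b : R) (p u v : vec) : vec :=
 (a * det2 p u * det2 p v * fst p + b * (det2 p u * fst v + det2 p v * fst u),
  a * det2 p u * det2 p v * snd p + b * (det2 p u * snd v + det2 p v * snd u)).

Lemma inv_at G (HI : SL2_invariant G) a b c d p u v p' u' v' :
  a*d-b*c=1 -> p' = lin a b c d p -> u' = lin a b c d u -> v' = lin a b c d v ->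
  Gam G p' u' v' = lin a b c d (Gam G p u v).
Proof. intros H -> -> ->; apply HI; exact H. Qed.

Ltac lq := unfold lin; cbn [fst snd]; f_equal; field.

Lemma Gam_e1 G : torsion_free G -> SL2_invariant G -> forall u v,
  Gam G (1,0) u v = Fm (G 1%nat 1%nat 0%nat 1 0) (G 0%nat 1%nat 0%nat 1 0) (1,0) u v.
Proof.
  intros HT HI u v.
  assert (E1 := inv_at G HI 1 1 0 1 (1,0) (1,0) (1,0) (1,0) (1,0) (1,0)
     ltac:(ring) ltac:(lq) ltac:(lq) ltac:(lq)).
  assert (E2 := inv_at G HI 1 1 0 1 (1,0) (1,0) (0,1) (1,0) (1,0) (1,1)
     ltac:(ring) ltac:(lq) ltac:(lq) ltac:(lq)).
  assert (E3 := inv_at G HI 1 1 0 1 (1,0) (0,1) (0,1) (1,0) (1,1) (1,1)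
     ltac:(ring) ltac:(lq) ltac:(lq) ltac:(lq)).
  assert (E4 := inv_at G HI 1 (-1) 0 1 (1,0) (0,1) (0,1) (1,0) (-1,1) (-1,1)
     ltac:(ring) ltac:(lq) ltac:(lq) ltac:(lq)).
  assert (T0 := HT 1%nat 0%nat 0%nat 1 0 ltac:(lia) ltac:(lia) ltac:(lia)).
  assert (T1 := HT 1%nat 0%nat 1%nat 1 0 ltac:(lia) ltac:(lia) ltac:(lia)).
  unfold Gam, sum2, cmp, lin in E1, E2, E3, E4; cbn [fst snd Nat.eqb] in E1, E2, E3, E4.
  injection E1; injection E2; injection E3; injection E4; intros.
  assert (H000 : G 0%nat 0%nat 0%nat 1 0 = 0) by lra.
  assert (H001 : G 0%nat 0%nat 1%nat 1 0 = 0) by lra.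
  assert (H011 : G 0%nat 1%nat 1%nat 1 0 = 0) by lra.
  assert (H111 : G 1%nat 1%nat 1%nat 1 0 = 2 * G 0%nat 1%nat 0%nat 1 0) by lra.
  unfold Gam, Fm, det2, sum2, cmp; cbn [fst snd Nat.eqb].
  rewrite T0, T1, H000, H001, H011, H111. f_equal; ring.
Qed.

Lemma Gam_all G : torsion_free G -> SL2_invariant G -> forall p u v,
  Gam G p u v = Fm (G 1%nat 1%nat 0%nat 1 0) (G 0%nat 1%nat 0%nat 1 0) p u v.
Proof.
  intros HT HI [x y] [u1 u2] [v1 v2].
  destruct (Req_dec (x*x+y*y) 0) as [Hn|Hn].
  - assert (x = 0) by nra. assert (y = 0) by nra. subst.
    assert (E := inv_at G HI (-1) 0 0 (-1) (0,0) (-u1,-u2) (-v1,-v2) (0,0) (u1,u2) (v1,v2)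
      ltac:(ring) ltac:(lq) ltac:(lq) ltac:(lq)).
    unfold Gam, sum2, cmp, lin in E |- *; cbn [fst snd Nat.eqb] in E |- *.
    injection E; intros E1 E2.
    unfold Fm, det2; cbn [fst snd]. f_equal; nra.
  - set (n := x*x+y*y).
    assert (E := inv_at G HI x (-y/n) y (x/n) (1,0) (x/n*u1 + y/n*u2, -y*u1 + x*u2)
      (x/n*v1 + y/n*v2, -y*v1 + x*v2) (x,y) (u1,u2) (v1,v2)
      ltac:(unfold n; field; exact Hn) ltac:(unfold lin; cbn [fst snd]; f_equal; unfold n; field; exact Hn) ltac:(unfold lin; cbn [fst snd]; f_equal; unfold n; field; exact Hn)
      ltac:(unfold lin; cbn [fst snd]; f_equal; unfold n; field; exact Hn)).
    rewrite E, Gam_e1 by assumption.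
    unfold Fm, lin, det2; cbn [fst snd]. f_equal; unfold n; field; exact Hn.
Qed.
Lemma Deq (f : R -> R) (t l l' : R) : is_derive f t l -> l = l' -> is_derive f t l'.
Proof. intros H ->; exact H. Qed.
Lemma Dmul (f g : R -> R) (t df dg : R) : is_derive f t df -> is_derive g t dg ->
  is_derive (fun s => f s * g s) t (df * g t + f t * dg).
Proof. intros H1 H2. exact (is_derive_mult f g t df dg H1 H2 Rmult_comm). Qed.
Lemma Dadd (f g : R -> R) (t df dg : R) : is_derive f t df -> is_derive g t dg ->
  is_derive (fun s => f s + g s) t (df + dg).
Proof. intros H1 H2. exact (is_derive_plus f g t df dg H1 H2). Qed.
Lemma Dsub (f g : R -> R) (t df dg : R) : is_derive f t df -> is_derive g t dg ->
  is_derive (fun s => f s - g s) t (df - dg).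
Proof. intros H1 H2. exact (is_derive_minus f g t df dg H1 H2). Qed.
Lemma Dscal (f : R -> R) (k t df : R) : is_derive f t df ->
  is_derive (fun s => k * f s) t (k * df).
Proof. apply is_derive_scal. Qed.
Lemma Did (t : R) : is_derive (fun s : R => s) t 1.
Proof. exact (is_derive_id t). Qed.
Lemma Dcst (k t : R) : is_derive (fun _ : R => k) t 0.
Proof. exact (is_derive_const k t). Qed.
Lemma Dcomp_lin (f df : R -> R) mu : mu <> 0 -> (forall t : R, is_derive f t (df t)) ->
  forall s : R, is_derive (fun s => f (s / mu)) s (df (s / mu) / mu).
Proof.
  intros Hmu Hf s.
  assert (H := is_derive_comp f (fun s => s / mu) s (df (s/mu)) (/mu) (Hf (s/mu))).
  apply Deq with (scal (/mu) (df (s/mu))).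
  - apply H. unfold Rdiv. apply Deq with (1 * /mu + s * 0). apply (Dmul (fun s => s) (fun _ => /mu)). apply Did. apply Dcst. rewrite Rmult_0_r, Rmult_1_l, Rplus_0_r; reflexivity.
  - unfold scal; simpl; unfold mult; simpl. field. exact Hmu.
Qed.
Lemma const0 (f : R -> R) : (forall t, is_derive f t 0) -> forall t, f t = f 0.
Proof.
  intros H t. destruct (Rtotal_order t 0) as [Hl|[He|Hg]].
  - apply eq_is_derive; [intros; apply H| exact Hl].
  - subst; reflexivity.
  - symmetry; apply eq_is_derive; [intros; apply H| exact Hg].
Qed.

Lemma no_blowup (h : R -> R) b : b <> 0 -> (forall t, is_derive h t (-2*b*h t^2)) -> h 0 = 1 -> False.
Proof.
  intros Hb Hd H0.
  assert (Hge : forall t, b * t <= 0 -> h t >= 1).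
  { intros t Ht.
    destruct (MVT_cor4 h (fun s => -2*b*h s^2) 0 (Rabs t) (fun c _ => Hd c) t)
      as [c [Hc _]]. rewrite Rminus_0_r; lra.
    rewrite H0 in Hc. nra. }
  set (phi := fun t => / h t - 2 * b * t).
  assert (Hp : forall t, b * t <= 0 -> is_derive phi t 0).
  { intros t Ht. unfold phi. assert (Hh := Hge t Ht).
    apply Deq with (- (-2*b*h t^2) / h t ^ 2 - 2 * b * 1).
    apply Dsub. apply is_derive_inv. apply Hd. lra. apply Dscal, Did.
    field. lra. }
  assert (Hs := Hge (-/b) ltac:(field_simplify; lra)).
  assert (Hinv : / h (-/b) > 0) by (apply Rinv_0_lt_compat; lra).
  assert (E : phi (-/b) = phi 0).
  { destruct (Rtotal_order b 0) as [Hl|[He|Hg]].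
    - symmetry. apply eq_is_derive.
      + intros t [Ht1 Ht2]. apply Hp. assert (t >= 0) by lra. nra.
      + assert (/b < 0) by (apply Rinv_lt_0_compat; lra). lra.
    - lra.
    - apply eq_is_derive.
      + intros t [Ht1 Ht2]. apply Hp. nra.
      + assert (/b > 0) by (apply Rinv_0_lt_compat; lra). lra. }
  unfold phi in E. rewrite H0, Rinv_1 in E.
  assert (2*b*(-/b) = -2) by (field; lra). lra.
Qed.
Definition cbrt (x : R) : R := if Rlt_dec 0 x then Rpower x (/3) else - Rpower (-x) (/3).
Lemma rp3 x : 0 < x -> Rpower x (/3) ^ 3 = x.
Proof.
  intros Hx. rewrite <- Rpower_pow by apply exp_pos.
  rewrite Rpower_mult. replace (/3 * INR 3) with 1 by (simpl; field). apply Rpower_1; exact Hx.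
Qed.
Lemma cbrt_cube x : x <> 0 -> cbrt x ^ 3 = x.
Proof.
  intros H. unfold cbrt. destruct (Rlt_dec 0 x).
  - apply rp3; lra.
  - replace ((- Rpower (-x) (/3)) ^ 3) with (- (Rpower (-x) (/3) ^ 3)) by ring.
    rewrite rp3; lra.
Qed.

Section Geo.
Variables (a b : R) (c v ac : R -> vec).
Hypothesis Hc : has_deriv c v.
Hypothesis Hv : has_deriv v ac.
Hypothesis Hac : forall t, fst (ac t) = - (a * det2 (c t) (v t) ^ 2 * fst (c t) + 2 * b * det2 (c t) (v t) * fst (v t))
   /\ snd (ac t) = - (a * det2 (c t) (v t) ^ 2 * snd (c t) + 2 * b * det2 (c t) (v t) * snd (v t)).

Lemma h_deriv : forall t, is_derive (fun t => det2 (c t) (v t)) t (-2*b*(det2 (c t) (v t))^2).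
Proof.
  intros t. destruct (Hc t) as [Hc1 Hc2]. destruct (Hv t) as [Hv1 Hv2]. destruct (Hac t) as [A1 A2].
  unfold det2.
  apply Deq with (fst (v t) * snd (v t) + fst (c t) * snd (ac t) - (snd (v t) * fst (v t) + snd (c t) * fst (ac t))).
  - apply Dsub; apply Dmul; assumption.
  - rewrite A1, A2. unfold det2. ring.
Qed.
End Geo.

Section Class.
Variables (a : R) (c v ac : R -> vec).
Hypothesis Ha : a <> 0.
Hypothesis Hc : has_deriv c v.
Hypothesis Hv : has_deriv v ac.
Hypothesis Hac : forall t, fst (ac t) = - (a * det2 (c t) (v t) ^ 2 * fst (c t))
   /\ snd (ac t) = - (a * det2 (c t) (v t) ^ 2 * snd (c t)).

Let h0 := det2 (c 0) (v 0).

Lemma hconst : forall t, det2 (c t) (v t) = h0.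
Proof.
  apply const0. intros t.
  apply Deq with (-2*0*(det2 (c t) (v t))^2); [|ring].
  apply (h_deriv a 0 c v ac Hc Hv). intros s. destruct (Hac s) as [A1 A2].
  rewrite A1, A2; split; ring.
Qed.

Lemma acc1 t : fst (ac t) = - (a * h0 ^ 2) * fst (c t).
Proof. destruct (Hac t) as [A _]. rewrite A, hconst. ring. Qed.
Lemma acc2 t : snd (ac t) = - (a * h0 ^ 2) * snd (c t).
Proof. destruct (Hac t) as [_ A]. rewrite A, hconst. ring. Qed.

Lemma case_line : h0 = 0 ->
  exists (alpha beta : R) (w : vec),
    forall t, c t = ((alpha * t + beta) * fst w, (alpha * t + beta) * snd w).
Proof.
  intros H0.
  assert (V1 : forall t, fst (v t) = fst (v 0)).
  { apply const0. intros t. apply Deq with (fst (ac t)). apply (Hv t). rewrite acc1, H0. ring. }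
  assert (V2 : forall t, snd (v t) = snd (v 0)).
  { apply const0. intros t. apply Deq with (snd (ac t)). apply (Hv t). rewrite acc2, H0. ring. }
  assert (C1 : forall t, fst (c t) - t * fst (v 0) = fst (c 0) - 0 * fst (v 0)).
  { apply (const0 (fun t => fst (c t) - t * fst (v 0))). intros t.
    apply Deq with (fst (v t) - (1 * fst (v 0) + t * 0)).
    apply Dsub. apply (Hc t). apply (Dmul (fun t => t) (fun _ => fst (v 0))). apply Did. apply Dcst.
    rewrite V1. ring. }
  assert (C2 : forall t, snd (c t) - t * snd (v 0) = snd (c 0) - 0 * snd (v 0)).
  { apply (const0 (fun t => snd (c t) - t * snd (v 0))). intros t.
    apply Deq with (snd (v t) - (1 * snd (v 0) + t * 0)).
    apply Dsub. apply (Hc t). apply (Dmul (fun t => t) (fun _ => snd (v 0))). apply Did. apply Dcst.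
    rewrite V2. ring. }
  unfold h0, det2 in H0.
  destruct (c 0) as [x y] eqn:Ec0. destruct (v 0) as [p q] eqn:Ev0. cbn [fst snd] in *.
  destruct (Req_dec (p*p+q*q) 0) as [Hn|Hn].
  - assert (p = 0) by nra. assert (q = 0) by nra. subst.
    exists 0, 1, (x,y). intros t. cbn [fst snd].
    specialize (C1 t). specialize (C2 t).
    destruct (c t) as [ct1 ct2]. cbn [fst snd] in *. f_equal; lra.
  - set (be := (x*p + y*q)/(p*p+q*q)).
    assert (K1 : q*(x*q-y*p)=0) by (rewrite H0; ring).
    assert (K2 : p*(x*q-y*p)=0) by (rewrite H0; ring).
    assert (Ex : x = be * p) by (unfold be; field_simplify_eq; [lra | exact Hn]).
    assert (Ey : y = be * q) by (unfold be; field_simplify_eq; [lra | exact Hn]).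
    exists 1, be, (p,q). intros t. cbn [fst snd].
    specialize (C1 t). specialize (C2 t).
    destruct (c t) as [ct1 ct2]. cbn [fst snd] in *. f_equal; nra.
Qed.

Lemma Dcl (f df : R -> R) (mu C : R) : mu <> 0 -> (forall t : R, is_derive f t (df t)) ->
  forall s : R, is_derive (fun s => C * f (s / mu)) s (C * df (s / mu) / mu).
Proof.
  intros Hm Hf s. apply Deq with (C * (df (s/mu) / mu)).
  apply Dscal. apply Dcomp_lin; assumption. unfold Rdiv; ring.
Qed.

Let lam := a * h0 ^ 2.

Lemma Nconst11 t : lam * (fst (c t) * fst (c t)) + fst (v t) * fst (v t)
   = lam * (fst (c 0) * fst (c 0)) + fst (v 0) * fst (v 0).
Proof.
  apply (const0 (fun t => lam * (fst (c t) * fst (c t)) + fst (v t) * fst (v t))). intros s.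
  destruct (Hc s) as [P1 P2]. destruct (Hv s) as [Q1 Q2].
  apply Deq with (lam * (fst (v s) * fst (c s) + fst (c s) * fst (v s)) + (fst (ac s) * fst (v s) + fst (v s) * fst (ac s))).
  apply Dadd. apply Dscal. apply Dmul; assumption. apply Dmul; assumption.
  rewrite acc1. unfold lam. ring.
Qed.
Lemma Nconst12 t : lam * (fst (c t) * snd (c t)) + fst (v t) * snd (v t)
   = lam * (fst (c 0) * snd (c 0)) + fst (v 0) * snd (v 0).
Proof.
  apply (const0 (fun t => lam * (fst (c t) * snd (c t)) + fst (v t) * snd (v t))). intros s.
  destruct (Hc s) as [P1 P2]. destruct (Hv s) as [Q1 Q2].
  apply Deq with (lam * (fst (v s) * snd (c s) + fst (c s) * snd (v s)) + (fst (ac s) * snd (v s) + fst (v s) * snd (ac s))).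
  apply Dadd. apply Dscal. apply Dmul; assumption. apply Dmul; assumption.
  rewrite acc1, acc2. unfold lam. ring.
Qed.
Lemma Nconst22 t : lam * (snd (c t) * snd (c t)) + snd (v t) * snd (v t)
   = lam * (snd (c 0) * snd (c 0)) + snd (v 0) * snd (v 0).
Proof.
  apply (const0 (fun t => lam * (snd (c t) * snd (c t)) + snd (v t) * snd (v t))). intros s.
  destruct (Hc s) as [P1 P2]. destruct (Hv s) as [Q1 Q2].
  apply Deq with (lam * (snd (v s) * snd (c s) + snd (c s) * snd (v s)) + (snd (ac s) * snd (v s) + snd (v s) * snd (ac s))).
  apply Dadd. apply Dscal. apply Dmul; assumption. apply Dmul; assumption.
  rewrite acc2. unfold lam. ring.
Qed.

Lemma case_conic : h0 <> 0 ->
       (exists (kappa mu nu : R) (gam g1 g2 g3 : R -> vec) (s11 s12 s22 : R),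
          kappa ^ 3 = a /\ mu <> 0 /\
          (forall t, c t = gam (mu * t + nu)) /\
          has_deriv gam g1 /\ has_deriv g1 g2 /\ has_deriv g2 g3 /\
          (forall s, det2 (g1 s) (g2 s) = 1) /\
          (forall s, det2 (g2 s) (g3 s) = kappa) /\
          s11 * s22 - s12 ^ 2 <> 0 /\
          (forall s, s11 * fst (gam s) ^ 2 + 2 * s12 * fst (gam s) * snd (gam s)
                     + s22 * snd (gam s) ^ 2 = 1)).
Proof.
  intros Hh.
  set (kappa := cbrt a).
  assert (Hk : kappa ^ 3 = a) by (apply cbrt_cube; exact Ha).
  assert (Hk0 : kappa <> 0) by (intro E; apply Ha; rewrite <- Hk, E; ring).
  set (mu := kappa * h0).
  assert (Hmu : mu <> 0) by (unfold mu; apply Rmult_integral_contrapositive; tauto).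
  exists kappa, mu, 0, (fun s => c (s / mu)),
    (fun s => (/mu * fst (v (s/mu)), /mu * snd (v (s/mu)))),
    (fun s => (/mu * /mu * fst (ac (s/mu)), /mu * /mu * snd (ac (s/mu)))),
    (fun s => (/mu * /mu * /mu * (- lam * fst (v (s/mu))), /mu * /mu * /mu * (- lam * snd (v (s/mu))))),
    ((lam * (snd (c 0) * snd (c 0)) + snd (v 0) * snd (v 0)) / h0 ^ 2),
    (- (lam * (fst (c 0) * snd (c 0)) + fst (v 0) * snd (v 0)) / h0 ^ 2),
    ((lam * (fst (c 0) * fst (c 0)) + fst (v 0) * fst (v 0)) / h0 ^ 2).
  split; [exact Hk|]. split; [exact Hmu|]. split.
  { intros t. f_equal. field. exact Hmu. }
  split.
  { intros s. cbn [fst snd]. split.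
    - apply Deq with (fst (v (s/mu)) / mu). apply (Dcomp_lin (fun t => fst (c t)) (fun t => fst (v t))).
      exact Hmu. intros t; apply Hc. unfold Rdiv; ring.
    - apply Deq with (snd (v (s/mu)) / mu). apply (Dcomp_lin (fun t => snd (c t)) (fun t => snd (v t))).
      exact Hmu. intros t; apply Hc. unfold Rdiv; ring. }
  split.
  { intros s. cbn [fst snd]. split.
    - apply Deq with (/mu * fst (ac (s/mu)) / mu). apply (Dcl (fun t => fst (v t)) (fun t => fst (ac t))).
      exact Hmu. intros t; apply Hv. unfold Rdiv; ring.
    - apply Deq with (/mu * snd (ac (s/mu)) / mu). apply (Dcl (fun t => snd (v t)) (fun t => snd (ac t))).
      exact Hmu. intros t; apply Hv. unfold Rdiv; ring. }
  split.
  { intros s. cbn [fst snd]. split.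
    - apply Deq with (/mu * /mu * (- lam * fst (v (s/mu))) / mu).
      apply (Dcl (fun t => fst (ac t)) (fun t => - lam * fst (v t))). exact Hmu.
      intros t. apply (is_derive_ext (fun t => - lam * fst (c t))).
      intros r; rewrite acc1; reflexivity. apply Dscal. apply Hc.
      unfold Rdiv; ring.
    - apply Deq with (/mu * /mu * (- lam * snd (v (s/mu))) / mu).
      apply (Dcl (fun t => snd (ac t)) (fun t => - lam * snd (v t))). exact Hmu.
      intros t. apply (is_derive_ext (fun t => - lam * snd (c t))).
      intros r; rewrite acc2; reflexivity. apply Dscal. apply Hc.
      unfold Rdiv; ring. }
  split.
  { intros s. unfold det2. cbn [fst snd]. rewrite acc1, acc2.
    assert (E := hconst (s/mu)). unfold det2 in E.
    transitivity (lam * (fst (c (s/mu)) * snd (v (s/mu)) - snd (c (s/mu)) * fst (v (s/mu))) / mu ^ 3).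
    unfold lam. field; exact Hmu. rewrite E. unfold lam, mu. rewrite <- Hk. field. split; assumption. }
  split.
  { intros s. unfold det2. cbn [fst snd]. rewrite acc1, acc2.
    assert (E := hconst (s/mu)). unfold det2 in E.
    transitivity (lam ^ 2 * (fst (c (s/mu)) * snd (v (s/mu)) - snd (c (s/mu)) * fst (v (s/mu))) / mu ^ 5).
    unfold lam; field; exact Hmu. rewrite E. unfold lam, mu. rewrite <- Hk. field. split; assumption. }
  split.
  { assert (E : forall x z : R, x = z -> z <> 0 -> x <> 0) by (intros x z Hxz Hz; rewrite Hxz; exact Hz).
    apply (E _ a); [|exact Ha].
    transitivity (lam * (fst (c 0) * snd (v 0) - snd (c 0) * fst (v 0)) ^ 2 / h0 ^ 4).
    field; exact Hh. fold (det2 (c 0) (v 0)). fold h0. unfold lam. field. exact Hh. }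
  { intros s. cbn [fst snd].
    rewrite <- (Nconst11 (s/mu)), <- (Nconst12 (s/mu)), <- (Nconst22 (s/mu)).
    assert (E := hconst (s/mu)). unfold det2 in E.
    transitivity ((fst (c (s/mu)) * snd (v (s/mu)) - snd (c (s/mu)) * fst (v (s/mu))) ^ 2 / h0 ^ 2).
    field; exact Hh. rewrite E. field. exact Hh. }
Qed.
End Class.

Lemma dpart0 (f : R -> R -> R) : (forall x y, f x y = 0) -> forall i x y, dpart i f x y = 0.
Proof.
  intros H i x y. unfold dpart. destruct (Nat.eqb i 0).
  - rewrite (Derive_ext _ (fun _ => 0)) by (intros; apply H). apply Derive_const.
  - rewrite (Derive_ext _ (fun _ => 0)) by (intros; apply H). apply Derive_const.
Qed.

Lemma zero_flat G : (forall i j k x y, (i<2)%nat -> (j<2)%nat -> (k<2)%nat -> G i j k x y = 0) -> flat G.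
Proof.
  intros H l i j k x y Hl Hi Hj Hk. unfold curv, sum2.
  rewrite !dpart0 by (intros; apply H; lia).
  repeat rewrite H by lia. ring.
Qed.

Definition bas (i : nat) : vec := if Nat.eqb i 0 then (1,0) else (0,1).

Lemma comp G i j k x y : (i<2)%nat -> (j<2)%nat -> (k<2)%nat ->
  G i j k x y = cmp (Gam G (x,y) (bas i) (bas j)) k.
Proof.
  intros Hi Hj Hk.
  destruct i as [|[|i]]; destruct j as [|[|j]]; destruct k as [|[|k]]; try lia;
  unfold Gam, bas, sum2, cmp; cbn [fst snd Nat.eqb]; ring.
Qed.

Theorem proposition8p1 (G : Chr) :
  torsion_free G -> real_analytic_conn G -> geod_complete G ->
  SL2_invariant G -> ~ flat G ->
  exists k : R, k <> 0 /\
    (* nabla_{dx} dx = k y^2 E, nabla_{dx} dy = - k x y E, nabla_{dy} dy = k x^2 E,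
       E = x dx + y dy *)
    (forall x y,
       G 0%nat 0%nat 0%nat x y = k * y ^ 2 * x /\ G 0%nat 0%nat 1%nat x y = k * y ^ 2 * y /\
       G 0%nat 1%nat 0%nat x y = - k * x * y * x /\ G 0%nat 1%nat 1%nat x y = - k * x * y * y /\
       G 1%nat 1%nat 0%nat x y = k * x ^ 2 * x /\ G 1%nat 1%nat 1%nat x y = k * x ^ 2 * y) /\
    (forall c : R -> vec, is_geodesic G c ->
       (* a line through the origin parametrized at constant speed *)
       (exists (alpha beta : R) (w : vec),
          forall t, c t = ((alpha * t + beta) * fst w, (alpha * t + beta) * snd w))
       \/
       (* a conic centered at the origin of special affine curvature kappa = k^(1/3),
          parametrized at constant speed w.r.t. special affine arc length:
          c(t) = gamma(mu t + nu) with gamma a special-affine-arclength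
          parametrization (det(gamma',gamma'') = 1) *)
       (exists (kappa mu nu : R) (gam g1 g2 g3 : R -> vec) (s11 s12 s22 : R),
          kappa ^ 3 = k /\ mu <> 0 /\
          (forall t, c t = gam (mu * t + nu)) /\
          has_deriv gam g1 /\ has_deriv g1 g2 /\ has_deriv g2 g3 /\
          (forall s, det2 (g1 s) (g2 s) = 1) /\
          (forall s, det2 (g2 s) (g3 s) = kappa) /\
          s11 * s22 - s12 ^ 2 <> 0 /\
          (forall s, s11 * fst (gam s) ^ 2 + 2 * s12 * fst (gam s) * snd (gam s)
                     + s22 * snd (gam s) ^ 2 = 1))).
Proof.
  intros HT _ HC HI HF.
  set (a := G 1%nat 1%nat 0%nat 1 0). set (b := G 0%nat 1%nat 0%nat 1 0).
  assert (HG : forall p u w, Gam G p u w = Fm a b p u w) by (apply Gam_all; assumption).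
  assert (Hacc : forall c v ac, geodesic_data G c v ac -> forall t,
     fst (ac t) = - (a * det2 (c t) (v t) ^ 2 * fst (c t) + 2 * b * det2 (c t) (v t) * fst (v t))
   /\ snd (ac t) = - (a * det2 (c t) (v t) ^ 2 * snd (c t) + 2 * b * det2 (c t) (v t) * snd (v t))).
  { intros c v ac [_ [_ Hg]] t. destruct (Hg t) as [E1 E2]. rewrite HG in E1, E2.
    unfold Fm in E1, E2. cbn [fst snd] in E1, E2. split; lra. }
  assert (Hb : b = 0).
  { destruct (Req_dec b 0) as [E|Hb]; [exact E|exfalso].
    destruct (HC (1,0) (0,1)) as [c [v [ac [Hd [c0 v0]]]]].
    destruct Hd as [Hc [Hv Hg]].
    apply (no_blowup (fun t => det2 (c t) (v t)) b Hb).
    - apply (h_deriv a b c v ac Hc Hv). apply (Hacc c v ac). split; [exact Hc|split; assumption].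
    - cbn beta. rewrite c0, v0. unfold det2; cbn [fst snd]; ring. }
  assert (Ha : a <> 0).
  { intro Ha0. apply HF, zero_flat. intros i j k x y Hi Hj Hk.
    rewrite (comp G i j k x y Hi Hj Hk), HG, Ha0, Hb.
    destruct k as [|[|k]]; [| |lia]; unfold Fm, cmp; cbn [fst snd Nat.eqb]; ring. }
  exists a. split; [exact Ha|]. split.
  { intros x y.
    rewrite !(comp G _ _ _ x y) by lia. rewrite !HG, Hb.
    unfold Fm, bas, cmp, det2; cbn [fst snd Nat.eqb].
    repeat split; ring. }
  intros c [v [ac Hd]].
  assert (Hd' := Hd). destruct Hd' as [Hc [Hv _]].
  assert (Hac : forall t, fst (ac t) = - (a * det2 (c t) (v t) ^ 2 * fst (c t))
   /\ snd (ac t) = - (a * det2 (c t) (v t) ^ 2 * snd (c t))).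
  { intros t. destruct (Hacc c v ac Hd t) as [E1 E2]. rewrite Hb in E1, E2. split; lra. }
  destruct (Req_dec (det2 (c 0) (v 0)) 0) as [H0|H0].
  - left. exact (case_line a c v ac Hc Hv Hac H0).
  - right. exact (case_conic a c v ac Ha Hc Hv Hac H0).
Qed.
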